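(* Let $M=(a_{ij})$ be a matrix game with entries in $[0,1]$ and value $v$, and let $\epsilon,c\ge0$. Let $M(t)$ be a corresponding repeated game with error $c\epsilon$ in which both players are $\epsilon$-Hannan consistent (with respect to the observed payoffs). Then almost surely \[v-(c+1)\epsilon\le\liminf_{t\to\infty}g(t)\le\limsup_{t\to\infty}g(t)\le v+(c+1)\epsilon,\] \[v-2(c+1)\epsilon\le\liminf_{t\to\infty}u(\hat\sigma_1(t),br)\le\limsup_{t\to\infty}u(br,\hat\sigma_2(t))\le v+2(c+1)\epsilon.\]
   Context: Repeated game with error $e$: at rounds $t=1,2,\dots$ player 1 chooses a row $i(t)$ and player 2 a column $j(t)$, and they observe a random payoff $a_{i(t)j(t)}(t)\in[0,1]$ whose distribution may depend on all previous action choices; it is required that almost surely there is $t_0$ with $|a_{ij}(t)-a_{ij}|<e$ for all $i,j$ and all $t\ge t_0$. Player 1 receives reward $a_{i(t)j(t)}(t)$ and player 2 the reward $1-a_{i(t)j(t)}(t)$. A player is $\epsilon$-Hannan consistent if its average external regret $r(t)=\frac1t(\max_k\sum_{s\le t}x_k(s)-\sum_{s\le t}x_{k(s)}(s))$ with respect to its observed rewards (where $x_k(s)$ is the reward it would have observed at round $s$ by playing $k$) satisfies $\limsup_t r(t)\le\epsilon$ a.s. Here $g(t)=\frac1t\sum_{s=1}^t a_{i(s)j(s)}(s)$; empirical frequencies $\hat\sigma_1(t)(i)=t_i/t$, $\hat\sigma_2(t)(j)=t_j/t$ with $t_i$ ($t_j$) the number of rounds $s\le t$ with $i(s)=i$ ($j(s)=j$).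 Utilities refer to the exact matrix: $u(\sigma_1,\sigma_2)=\sigma_1M\sigma_2$, $u(br,\sigma_2)=\max_{\sigma_1'}\sigma_1'M\sigma_2$, $u(\sigma_1,br)=\min_{\sigma_2'}\sigma_1M\sigma_2'$. *)

(* Defs.v *)
From HB Require Import structures.
From mathcomp Require Import all_boot all_order all_algebra.
From mathcomp Require Import all_classical all_reals all_analysis.
Set Implicit Arguments. Unset Strict Implicit. Unset Printing Implicit Defensive.
Import Order.TTheory GRing.Theory Num.Theory.
Local Open Scope classical_set_scope.
Local Open Scope ring_scope.

Section Game.
Context {R : realType}.

Definition mixed (k : nat) : set 'rV[R]_k :=
  [set s | (forall i, 0 <= s 0 i) /\ \sum_i s 0 i = 1].
Arguments mixed : clear implicits.

Definition util (m n : nat) (M : 'M[R]_(m, n)) (s1 : 'rV[R]_m) (s2 : 'rV[R]_n) : R :=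
  \sum_i \sum_j s1 0 i * M i j * s2 0 j.

Definition util_br1 m n (M : 'M[R]_(m, n)) (s2 : 'rV[R]_n) : R :=
  sup [set util M s1 s2 | s1 in mixed m].

Definition util_br2 m n (M : 'M[R]_(m, n)) (s1 : 'rV[R]_m) : R :=
  inf [set util M s1 s2 | s2 in mixed n].

Definition game_value m n (M : 'M[R]_(m, n)) : R :=
  sup [set util_br2 M s1 | s1 in mixed m].

(* Rounds are t = 1, 2, ...; the index 0 of the processes is unused. *)

Definition avg_payoff m n (a : nat -> 'I_m -> 'I_n -> R)
  (i : nat -> 'I_m) (j : nat -> 'I_n) (t : nat) : R :=
  t%:R^-1 * \sum_(1 <= s < t.+1) a s (i s) (j s).

Definition emp_freq k (i : nat -> 'I_k) (t : nat) : 'rV[R]_k :=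
  \row_l (t%:R^-1 * \sum_(1 <= s < t.+1) ((i s == l)%:R : R)).

Definition regret k (x : nat -> 'I_k.+1 -> R) (act : nat -> 'I_k.+1) (t : nat) : R :=
  t%:R^-1 *
  (\big[Num.max/ \sum_(1 <= s < t.+1) x s ord0]_(l < k.+1) \sum_(1 <= s < t.+1) x s l
   - \sum_(1 <= s < t.+1) x s (act s)).

End Game.

(* Main.v *)
Require Import Defs.
From HB Require Import structures.
From mathcomp Require Import all_boot all_order all_algebra.
From mathcomp Require Import all_classical all_reals all_analysis.
From mathcomp Require Import ring lra zify.
Import Order.TTheory GRing.Theory Num.Theory.
Local Open Scope classical_set_scope.
Local Open Scope ring_scope.
Section G.
Context {R : realType} (m n : nat) (M : 'M[R]_(m.+1, n.+1)).
Hypothesis M01 : forall k l, 0 <= M k l <= 1.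

Lemma util_ge0 {s1 s2} : mixed s1 -> mixed s2 -> 0 <= util M s1 s2.
Proof.
move=> [s1p _] [s2p _]; apply: sumr_ge0 => k _; apply: sumr_ge0 => l _.
by rewrite !mulr_ge0 //; case/andP: (M01 k l).
Qed.

Lemma util_le1 {s1 s2} : mixed s1 -> mixed s2 -> util M s1 s2 <= 1.
Proof.
move=> [s1p s11] [s2p s21].
apply: (@le_trans _ _ (\sum_k \sum_l s1 0 k * s2 0 l)).
  apply: ler_sum => k _; apply: ler_sum => l _.
  rewrite -mulrA ler_wpM2l //. 
  by rewrite ler_piMl //; case/andP: (M01 k l).
under eq_bigr do rewrite -mulr_sumr s21 mulr1.
by rewrite s11.
Qed.

Lemma mixed_e k (l : 'I_k.+1) : @mixed R k.+1 (\row_j (j == l)%:R).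
Proof.
split=> [i|]; first by rewrite mxE ler0n.
rewrite (bigD1 l) //= big1 ?mxE ?eqxx ?addr0 // => i /negbTE il.
by rewrite mxE il.
Qed.

Lemma br2_le {s1 s2} : mixed s1 -> mixed s2 -> util_br2 M s1 <= util M s1 s2.
Proof.
move=> h1 h2; apply: ge_inf; last by exists s2.
by exists 0 => _ [s ms <-]; exact: util_ge0.
Qed.

Lemma br2_ge s1 x : (forall s2, mixed s2 -> x <= util M s1 s2) -> x <= util_br2 M s1.
Proof.
move=> h; apply: lb_le_inf; first by exists (util M s1 (\row_j (j == ord0)%:R)); exists (\row_j (j == ord0)%:R) => //; exact: mixed_e.
by move=> _ [s ms <-]; exact: h.
Qed.

Lemma br1_ge {s1 s2} : mixed s1 -> mixed s2 -> util M s1 s2 <= util_br1 M s2.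
Proof.
move=> h1 h2; apply: ub_le_sup; last by exists s1.
by exists 1 => _ [s ms <-]; exact: util_le1.
Qed.

Lemma br1_le s2 x : (forall s1, mixed s1 -> util M s1 s2 <= x) -> util_br1 M s2 <= x.
Proof.
move=> h; apply: ge_sup; first by exists (util M (\row_j (j == ord0)%:R) s2); exists (\row_j (j == ord0)%:R) => //; exact: mixed_e.
by move=> _ [s ms <-]; exact: h.
Qed.

Lemma br2_le_v s1 : mixed s1 -> util_br2 M s1 <= game_value M.
Proof.
move=> h1; apply: ub_le_sup; last by exists s1.
exists 1 => _ [s ms <-].
have e0 := @mixed_e n ord0.
exact: le_trans (br2_le ms e0) (util_le1 ms e0).
Qed.

Lemma v_le_br1 s2 : mixed s2 -> game_value M <= util_br1 M s2.
Proof.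
move=> h2; apply: ge_sup; first by exists (util_br2 M (\row_j (j == ord0)%:R)); exists (\row_j (j == ord0)%:R) => //; exact: mixed_e.
move=> _ [s ms <-]; apply: le_trans (br2_le ms h2) _; exact: br1_ge.
Qed.
End G.
Section E.
Context {R : realType}.

Lemma delta_sum {k} (x : 'I_k) (F : 'I_k -> R) : \sum_y (x == y)%:R * F y = F x.
Proof.
rewrite (bigD1 x) //= eqxx mul1r big1 ?addr0 // => y /negbTE; rewrite eq_sym => ->.
by rewrite mul0r.
Qed.

Lemma emp_mixed k (i : nat -> 'I_k.+1) t : (0 < t)%N -> mixed (emp_freq i t : 'rV[R]_k.+1).
Proof.
move=> t0; split=> [l|].
  by rewrite mxE mulr_ge0 ?invr_ge0 ?ler0n // sumr_ge0 // => s _; rewrite ler0n.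
under eq_bigr do rewrite mxE.
rewrite -mulr_sumr exchange_big /=.
under eq_bigr => s _.
  have -> : \sum_(l < k.+1) ((i s == l)%:R : R) = 1.
    by rewrite (eq_bigr (fun l => (i s == l)%:R * 1)) ?(delta_sum (i s) (fun _ => 1)) // => l _; rewrite mulr1.
  over.
by rewrite sumr_const_nat subn1 /= mulVf // pnatr_eq0 -lt0n t0.
Qed.

Lemma util_emp1 m n (M : 'M[R]_(m, n)) (i : nat -> 'I_m) t s2 :
  util M (emp_freq i t) s2 = t%:R^-1 * \sum_(1 <= s < t.+1) \sum_l M (i s) l * s2 0 l.
Proof.
rewrite /util mulr_sumr.
under [RHS]eq_bigr => s _.
  under eq_bigr => l _ do rewrite -(delta_sum (i s) (fun k => M k l * s2 0 l)).
  rewrite exchange_big /= mulr_sumr.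
  over.
rewrite /= [RHS]exchange_big /=; apply: eq_bigr => k _.
under [RHS]eq_bigr do rewrite mulr_sumr.
rewrite [RHS]exchange_big /=; apply: eq_bigr => l _.
rewrite mxE -mulr_sumr -mulr_suml -!mulrA; congr (_ * _).
Qed.

Lemma util_emp2 m n (M : 'M[R]_(m, n)) (j : nat -> 'I_n) t s1 :
  util M s1 (emp_freq j t) = t%:R^-1 * \sum_(1 <= s < t.+1) \sum_k s1 0 k * M k (j s).
Proof.
rewrite /util mulr_sumr.
under [RHS]eq_bigr => s _.
  under eq_bigr => k _ do rewrite -(delta_sum (j s) (fun l => s1 0 k * M k l)).
  rewrite mulr_sumr.
  over.
rewrite /= [RHS]exchange_big /=; apply: eq_bigr => k _.
under [RHS]eq_bigr do rewrite mulr_sumr.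
rewrite [RHS]exchange_big /=; apply: eq_bigr => l _.
rewrite mxE -mulr_sumr -mulr_suml; set S := \sum_(_ <= _ < _) _; ring.
Qed.
End E.
Section E.
Context {R : realType}.

Lemma err_sum (F : nat -> R) (t0 : nat) (ce : R) :
  0 <= ce -> (forall s, F s <= 1) -> (forall s, (t0 <= s)%N -> F s <= ce) ->
  forall t, \sum_(1 <= s < t.+1) F s <= t0%:R + t%:R * ce.
Proof.
move=> ce0 F1 Fce.
suff H : forall t, \sum_(1 <= s < t.+1) F s <= (minn t t0)%:R + t%:R * ce.
  move=> t; apply: le_trans (H t) _; rewrite lerD2r ler_nat; exact: geq_minr.
elim=> [|t IH]; first by rewrite big_geq // mul0r addr0 ler0n.
rewrite big_nat_recr //=.
have [lt|ge] := ltnP t.+1 t0.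
  have e : minn t t0 = t by rewrite minnE; lia.
  rewrite e in IH; rewrite -natr1.
  have := F1 t.+1; lra.
have e : (minn t t0 <= t0)%N by rewrite geq_minr.
move: e; rewrite -(ler_nat R) => e.
rewrite -natr1.
have := Fce _ ge; lra.
Qed.
End E.
Section Bnd.
Context {R : realType} (m n : nat) (M : 'M[R]_(m.+1,n.+1))
  (a : nat -> 'I_m.+1 -> 'I_n.+1 -> R) (i : nat -> 'I_m.+1) (j : nat -> 'I_n.+1)
  (ce : R) (t0 : nat).
Hypothesis M01 : forall k l, 0 <= M k l <= 1.
Hypothesis a01 : forall s k l, 0 <= a s k l <= 1.
Hypothesis ce0 : 0 <= ce.
Hypothesis Herr : forall s, (t0 <= s)%N -> forall k l, `|a s k l - M k l| < ce.

Lemma bnd1 t : (0 < t)%N ->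
  avg_payoff a i j t - regret (fun s l => 1 - a s (i s) l) j t - ce - t%:R^-1 * t0%:R
  <= util_br2 M (emp_freq i t).
Proof.
move=> tp; apply: br2_ge => s2 ms2.
rewrite util_emp1 /avg_payoff /regret.
set G := \sum_(1 <= s < t.+1) a s (i s) (j s).
set D := (\big[Num.max/_]_(_ < _) _ - _).
have H : forall l, G - t0%:R - t%:R * ce - D <= \sum_(1 <= s < t.+1) M (i s) l.
  move=> l.
  have hD : \sum_(1 <= s < t.+1) (1 - a s (i s) l) - \sum_(1 <= s < t.+1) (1 - a s (i s) (j s)) <= D.
    by rewrite /D lerD2r; apply: le_bigmax.
  have he := @err_sum R (fun s => a s (i s) l - M (i s) l) t0 ce ce0.
  have {he} he : \sum_(1 <= s < t.+1) (a s (i s) l - M (i s) l) <= t0%:R + t%:R * ce.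
    apply: he => s.
      by have := a01 s (i s) l; have := M01 (i s) l; lra.
    move=> /Herr /(_ (i s) l); rewrite ltr_norml; lra.
  move: hD he; rewrite !sumrB /G; lra.
have Hs : \sum_l s2 0 l * (G - t0%:R - t%:R * ce - D)
     <= \sum_l s2 0 l * \sum_(1 <= s < t.+1) M (i s) l.
  by apply: ler_sum => l _; apply: ler_wpM2l => //; case: ms2.
rewrite -mulr_suml (proj2 ms2) mul1r in Hs.
rewrite (eq_bigr (fun l => \sum_(1 <= s < t.+1) s2 0 l * M (i s) l)) in Hs; last by move=> l _; rewrite mulr_sumr.
rewrite exchange_big /= in Hs.
have tinv : 0 <= t%:R^-1 :> R by rewrite invr_ge0 ler0n.
have := ler_wpM2l tinv Hs.
have -> : t%:R^-1 * (G - t0%:R - t%:R * ce - D) = t%:R^-1 * G - t%:R^-1 * D - ce - t%:R^-1 * t0%:R.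
  by field; rewrite pnatr_eq0 -lt0n.
move=> h; apply: le_trans h _; rewrite ler_wpM2l //; apply: ler_sum => s _.
by apply: ler_sum => l _; rewrite mulrC.
Qed.
Lemma bnd2 t : (0 < t)%N ->
  util_br1 M (emp_freq j t) <=
  avg_payoff a i j t + regret (fun s k => a s k (j s)) i t + ce + t%:R^-1 * t0%:R.
Proof.
move=> tp; apply: br1_le => s1 ms1.
rewrite util_emp2 /avg_payoff /regret.
set G := \sum_(1 <= s < t.+1) a s (i s) (j s).
set D := (\big[Num.max/_]_(_ < _) _ - _).
have H : forall k, \sum_(1 <= s < t.+1) M k (j s) <= G + D + t0%:R + t%:R * ce.
  move=> k.
  have hD : \sum_(1 <= s < t.+1) a s k (j s) - G <= D.
    by rewrite /D lerD2r; apply: le_bigmax.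
  have he := @err_sum R (fun s => M k (j s) - a s k (j s)) t0 ce ce0.
  have {he} he : \sum_(1 <= s < t.+1) (M k (j s) - a s k (j s)) <= t0%:R + t%:R * ce.
    apply: he => s.
      by have := a01 s k (j s); have := M01 k (j s); lra.
    move=> /Herr /(_ k (j s)); rewrite ltr_norml; lra.
  move: hD he; rewrite !sumrB /G; lra.
have Hs : \sum_k s1 0 k * \sum_(1 <= s < t.+1) M k (j s)
     <= \sum_k s1 0 k * (G + D + t0%:R + t%:R * ce).
  by apply: ler_sum => k _; apply: ler_wpM2l => //; case: ms1.
rewrite -[X in _ <= X]mulr_suml (proj2 ms1) mul1r in Hs.
rewrite (eq_bigr (fun k => \sum_(1 <= s < t.+1) s1 0 k * M k (j s))) in Hs; last by move=> k _; rewrite mulr_sumr.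
rewrite exchange_big /= in Hs.
have tinv : 0 <= t%:R^-1 :> R by rewrite invr_ge0 ler0n.
have := ler_wpM2l tinv Hs.
have -> : t%:R^-1 * (G + D + t0%:R + t%:R * ce) = t%:R^-1 * G + t%:R^-1 * D + ce + t%:R^-1 * t0%:R.
  by field; rewrite pnatr_eq0 -lt0n.
by [].
Qed.
End Bnd.
Section ES.
Context {R : realType}.
Implicit Types (u : nat -> R) (x : R).

Lemma es1 u x : (limn_esup (fun t => (u t)%:E) <= x%:E)%E ->
  forall e, 0 < e -> \forall t \near \oo, u t <= x + e.
Proof.
move=> h e e0.
have : (limn_esup (fun t => (u t)%:E) < (x + e)%:E)%E.
  by apply: le_lt_trans h _; rewrite lte_fin ltrDl.
rewrite /limn_esup /limf_esup => /ereal_inf_lt[_ [V Voo <-]] hV.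
apply: filterS Voo => t Vt.
have : ((u t)%:E <= ereal_sup ((fun t => (u t)%:E) @` V))%E.
  by apply: ereal_sup_ubound; exists t.
move=> /le_lt_trans /(_ hV); rewrite lte_fin; exact: ltW.
Qed.

Lemma es2 u x : (forall e, 0 < e -> \forall t \near \oo, u t <= x + e) ->
  (limn_esup (fun t => (u t)%:E) <= x%:E)%E.
Proof.
move=> h; apply/lee_addgt0Pr => e e0.
rewrite /limn_esup /limf_esup.
apply: (@le_trans _ _ (ereal_sup ((fun t => (u t)%:E) @` [set t | u t <= x + e]))).
  by apply: ereal_inf_lbound; exists [set t | u t <= x + e] => //; exact: h.
apply: ge_ereal_sup => _ [t /= ht <-]; by rewrite -EFinD lee_fin.
Qed.

Lemma es3 u x : (forall e, 0 < e -> \forall t \near \oo, x - e <= u t) ->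
  (x%:E <= limn_einf (fun t => (u t)%:E))%E.
Proof.
move=> h; rewrite /limn_einf leeNr.
have -> : (fun t => - (u t)%:E)%E = (fun t => (- u t)%:E) by [].
rewrite -EFinN.
apply: es2 => e e0; apply: filterS (h e e0) => t; lra.
Qed.
End ES.
Section ES2.
Context {R : realType}.
Lemma E_small (t0 : nat) (e : R) : 0 < e -> \forall t \near \oo, (0 < t)%N /\ t%:R^-1 * t0%:R <= e.
Proof.
move=> e0.
have h := @archi_boundP R (t0%:R / e) (divr_ge0 (ler0n _ _) (ltW e0)).
set N := Num.Def.archi_bound _ in h.
near=> t; split.
  near: t; exists 1%N => //.
have tN : (N <= t)%N by near: t; exists N.
have tp : (0 : R) < t%:R.
  rewrite ltr0n; near: t; exists 1%N => //.
rewrite ltr_pdivrMr // in h.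
have : N%:R <= t%:R :> R by rewrite ler_nat.
move=> Nt.
have h2 : t0%:R < t%:R * e by apply: lt_le_trans h _; rewrite ler_pM2r.
apply: (@le_trans _ _ (t%:R^-1 * (t%:R * e))).
  by rewrite ler_wpM2l ?invr_ge0 ?ler0n // ltW.
by rewrite mulrA mulVf ?mul1r // gt_eqF.
Unshelve. all: end_near.
Qed.
End ES2.
Theorem proposition1 (R : realType) (d : measure_display) (Omega : measurableType d)
  (P : probability Omega R) (m n : nat) (M : 'M[R]_(m.+1, n.+1))
  (eps c : R)
  (a : nat -> Omega -> 'I_m.+1 -> 'I_n.+1 -> R)
  (i : nat -> Omega -> 'I_m.+1) (j : nat -> Omega -> 'I_n.+1) :
  (forall k l, 0 <= M k l <= 1) ->
  0 <= eps -> 0 <= c ->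
  (forall t w k l, 0 <= a t w k l <= 1) ->
  (* repeated game with error c * eps *)
  {ae P, forall w, exists t0 : nat, forall t, (t0 <= t)%N ->
      forall k l, `|a t w k l - M k l| < c * eps} ->
  (* player 1 is eps-Hannan consistent w.r.t. observed rewards a_{k j(s)}(s) *)
  {ae P, forall w, limn_esup (fun t => (regret (fun s k => a s w k (j s w))
                                              (fun s => i s w) t)%:E) <= eps%:E}%E ->
  (* player 2 is eps-Hannan consistent w.r.t. observed rewards 1 - a_{i(s) l}(s) *)
  {ae P, forall w, limn_esup (fun t => (regret (fun s l => 1 - a s w (i s w) l)
                                              (fun s => j s w) t)%:E) <= eps%:E}%E ->
  {ae P, forall w,
    let g := fun t => (avg_payoff (fun s => a s w) (fun s => i s w) (fun s => j s w) t)%:E in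
    let v := game_value M in
    [/\ (v - (c + 1) * eps)%:E <= limn_einf g,
        limn_einf g <= limn_esup g
      & limn_esup g <= (v + (c + 1) * eps)%:E] /\
    [/\ (v - 2 * (c + 1) * eps)%:E
          <= limn_einf (fun t => (util_br2 M (emp_freq (fun s => i s w) t))%:E),
        limn_einf (fun t => (util_br2 M (emp_freq (fun s => i s w) t))%:E)
          <= limn_esup (fun t => (util_br1 M (emp_freq (fun s => j s w) t))%:E)
      & limn_esup (fun t => (util_br1 M (emp_freq (fun s => j s w) t))%:E)
          <= (v + 2 * (c + 1) * eps)%:E]}%E.
Proof.
move=> M01 eps0 c0 a01 Herr H1 H2.
have ce0 : 0 <= c * eps by rewrite mulr_ge0.
apply: (filterS3 _ _ Herr H1 H2) => w [t0 Ht0] h1 h2 /=.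
pose g := fun t => avg_payoff (fun s => a s w) (fun s => i s w) (fun s => j s w) t.
pose A := fun t => regret (fun s k => a s w k (j s w)) (fun s => i s w) t.
pose B := fun t => regret (fun s l => 1 - a s w (i s w) l) (fun s => j s w) t.
pose U2 := fun t => util_br2 M (emp_freq (fun s => i s w) t).
pose U1 := fun t => util_br1 M (emp_freq (fun s => j s w) t).
pose v := game_value M.
have key : forall t, (0 < t)%N ->
  [/\ g t - B t - c * eps - t%:R^-1 * t0%:R <= U2 t,
      U1 t <= g t + A t + c * eps + t%:R^-1 * t0%:R,
      U2 t <= v & v <= U1 t].
  move=> t tp; split.
  - exact: (@bnd1 R m n M (fun s => a s w) (fun s => i s w) (fun s => j s w) (c * eps) t0 M01 (fun s => a01 s w) ce0 Ht0 t tp).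
  - exact: (@bnd2 R m n M (fun s => a s w) (fun s => i s w) (fun s => j s w) (c * eps) t0 M01 (fun s => a01 s w) ce0 Ht0 t tp).
  - exact: (@br2_le_v R m n M M01 _ (emp_mixed _ _ _ tp)).
  - exact: (@v_le_br1 R m n M M01 _ (emp_mixed _ _ _ tp)).
have ev : forall e, 0 < e -> \forall t \near \oo,
    [/\ (0 < t)%N, A t <= eps + e, B t <= eps + e & t%:R^-1 * t0%:R <= e].
  move=> e e0.
  have q1 := es1 _ _ h1 _ e0; have q2 := es1 _ _ h2 _ e0; have q3 := E_small t0 _ e0.
  apply: (filterS3 _ _ q1 q2 q3).
  by move=> t hA hB [tp hE]; split.
have ev' : forall e, 0 < e -> \forall t \near \oo,
    [/\ g t - B t - c * eps - t%:R^-1 * t0%:R <= U2 t,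
      U1 t <= g t + A t + c * eps + t%:R^-1 * t0%:R,
      U2 t <= v, v <= U1 t &
     [/\ A t <= eps + e, B t <= eps + e & t%:R^-1 * t0%:R <= e]].
  move=> e e0; apply: filterS (ev e e0) => t [tp hA hB hE].
  by have [k1 k2 k3 k4] := key t tp; split.
have e2 : forall e : R, 0 < e -> 0 < e / 2 by move=> e e0; rewrite divr_gt0.
have e4 : forall e : R, 0 < e -> 0 < e / 4 by move=> e e0; rewrite divr_gt0.
split; split.
- apply: es3 => e e0; apply: filterS (ev' _ (e2 _ e0)) => t [k1 k2 k3 k4 [hA hB hE]]; move: k1 k2 k3 k4 hA hB hE; rewrite /g /A /B /U1 /U2 /v /=; lra.
- exact: limn_einf_sup.
- apply: es2 => e e0; apply: filterS (ev' _ (e2 _ e0)) => t [k1 k2 k3 k4 [hA hB hE]]; move: k1 k2 k3 k4 hA hB hE; rewrite /g /A /B /U1 /U2 /v /=; lra.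
- apply: es3 => e e0; apply: filterS (ev' _ (e4 _ e0)) => t [k1 k2 k3 k4 [hA hB hE]]; move: k1 k2 k3 k4 hA hB hE; rewrite /g /A /B /U1 /U2 /v /=; lra.
- apply: le_trans (limn_einf_sup _) _.
  apply: (@le_trans _ _ v%:E).
    apply: es2 => e e0; apply: filterS (ev' _ e0) => t [k1 k2 k3 k4 [hA hB hE]]; move: k1 k2 k3 k4 hA hB hE; rewrite /g /A /B /U1 /U2 /v /=; lra.
  apply: le_trans (limn_einf_sup _).
  apply: es3 => e e0; apply: filterS (ev' _ e0) => t [k1 k2 k3 k4 [hA hB hE]]; move: k1 k2 k3 k4 hA hB hE; rewrite /g /A /B /U1 /U2 /v /=; lra.
- apply: es2 => e e0; apply: filterS (ev' _ (e4 _ e0)) => t [k1 k2 k3 k4 [hA hB hE]]; move: k1 k2 k3 k4 hA hB hE; rewrite /g /A /B /U1 /U2 /v /=; lra.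
Qed.
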